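(* Let $F$ be a field, $M$ an $F$-algebra and $B$ a separable $F$-subalgebra of $M$. Then every first-order deformation $\varphi:B\to M$ is given by conjugation: there exists an invertible $a\in M$ such that $\varphi(b)=aba^{-1}$ for every $b\in B$. In particular, any such deformation extends to an automorphism of $M$ and fixes $B\cap Z(M)$ pointwise.
   Context: A first-order deformation of a subalgebra $B\subseteq M$ is an $F$-linear map $\varphi:B\to M$ such that $\delta=\varphi-\mathrm{id}$ satisfies $\delta(bc)=\delta(b)c+b\delta(c)$ and $\delta(b)\delta(c)=0$ for all $b,c\in B$. $B$ is separable if it admits a separating idempotent $e\in B\otimes_F B$ (image $1$ under multiplication and $(b\otimes1)e=e(1\otimes b)$ for all $b\in B$), equivalently $B$ is semisimple with étale center. $Z(M)$ is the center of $M$. *)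

(* Defs.v *)
From HB Require Import structures.
From mathcomp Require Import all_boot all_order all_algebra.
Set Implicit Arguments. Unset Strict Implicit. Unset Printing Implicit Defensive.
Import GRing.Theory.
Local Open Scope ring_scope.

(* F : fieldType, M : algType F (associative unital F-algebra,
   not necessarily commutative nor finite-dimensional).  A subalgebra B of M is
   represented by a predicate on M. *)

Section Defs.
Variables (F : fieldType) (M : algType F).

Definition is_subalgebra (B : {pred M}) : Prop :=
  [/\ 1 \in B,
      forall x y, x \in B -> y \in B -> x + y \in B,
      forall (k : F) x, x \in B -> k *: x \in B &
      forall x y, x \in B -> y \in B -> x * y \in B].

Definition bilinear_on (B : {pred M}) (V : lmodType F) (beta : M -> M -> V) : Prop :=
  (forall (k : F) x x' y, x \in B -> x' \in B -> y \in B ->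
     beta (k *: x + x') y = k *: beta x y + beta x' y) /\
  (forall (k : F) x y y', x \in B -> y \in B -> y' \in B ->
     beta x (k *: y + y') = k *: beta x y + beta x y').

(* Equality in B (x)_F B of the two tensors  sum_{p in s} p.1 (x) p.2  and
   sum_{p in t} p.1 (x) p.2  (all components lying in B), via the universal
   property of the tensor product: every F-bilinear map out of B x B agrees. *)
Definition tensor_eq (B : {pred M}) (s t : seq (M * M)) : Prop :=
  forall (V : lmodType F) (beta : M -> M -> V), bilinear_on B beta ->
    \sum_(p <- s) beta p.1 p.2 = \sum_(p <- t) beta p.1 p.2.

(* e = sum_i x_i (x) y_i  is a separating idempotent of B:
   mult(e) = 1 and (b (x) 1) e = e (1 (x) b) for all b in B. *)
Definition separating_idempotent (B : {pred M}) (e : seq (M * M)) : Prop :=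
  [/\ all (fun p => (p.1 \in B) && (p.2 \in B)) e,
      \sum_(p <- e) p.1 * p.2 = 1 &
      forall b, b \in B ->
        tensor_eq B [seq (b * p.1, p.2) | p <- e] [seq (p.1, p.2 * b) | p <- e]].

Definition separable_subalgebra (B : {pred M}) : Prop :=
  is_subalgebra B /\ exists e, separating_idempotent B e.

(* phi : B -> M (represented as a function on M; only its values on B matter)
   is a first-order deformation: phi is F-linear on B and delta = phi - id
   satisfies delta(bc) = delta(b)c + b delta(c) and delta(b)delta(c) = 0. *)
Definition first_order_deformation (B : {pred M}) (phi : M -> M) : Prop :=
  let delta := fun x => phi x - x in
  [/\ forall (k : F) b c, b \in B -> c \in B -> phi (k *: b + c) = k *: phi b + phi c,
      forall b c, b \in B -> c \in B -> delta (b * c) = delta b * c + b * delta c &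
      forall b c, b \in B -> c \in B -> delta b * delta c = 0].

Definition is_alg_automorphism (psi : M -> M) : Prop :=
  [/\ forall (k : F) x y, psi (k *: x + y) = k *: psi x + psi y,
      forall x y, psi (x * y) = psi x * psi y,
      psi 1 = 1 & bijective psi].

End Defs.

(* Main.v *)
Require Import Defs.
From HB Require Import structures.
From mathcomp Require Import all_boot all_order all_algebra.
Import GRing.Theory.
Local Open Scope ring_scope.

Lemma conj_exists (F : fieldType) (M : algType F) (B : {pred M}) (phi : M -> M) :
  separable_subalgebra B ->
  first_order_deformation B phi ->
  exists a a' : M,
      [/\ a * a' = 1, a' * a = 1 &
          forall b, b \in B -> phi b = a * b * a'].
Proof.
move=> [[B1 BD BZ BM] [e [alle sum1 teq]]] [HL Hder Hdd].
pose d := fun x => phi x - x.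
have inB : forall p, p \in e -> (p.1 \in B) /\ (p.2 \in B).
  by move=> p Hp; have /andP[] := allP alle p Hp.
have dlin : forall (k : F) x y, x \in B -> y \in B -> d (k *: x + y) = k *: d x + d y.
  move=> k x y Hx Hy; rewrite /d HL // opprD addrACA scalerBr //.
pose w := \sum_(p <- e) d p.1 * p.2.
have Hderiv : forall b, b \in B -> d b = w * b - b * w.
  move=> b Hb.
  have H := teq b Hb M (fun x y => d x * y).
  have bil : bilinear_on B (fun x y => d x * y).
    split=> k x x' y Hx Hx' Hy /=.
      by rewrite dlin // mulrDl -scalerAl.
    by rewrite mulrDr -scalerAr.
  move: (H bil); rewrite !big_map /= => H2.
  have E1 : \sum_(p <- e) d (b * p.1) * p.2 = d b + b * w.
    rewrite /w mulr_sumr -[d b]mulr1 -sum1 mulr_sumr -big_split /=.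
    apply: eq_big_seq => p Hp; have [H1 H2'] := inB p Hp.
    have := Hder b p.1 Hb H1 => /= E; rewrite /d E.
    by rewrite mulrDl !mulrA.
  have E2 : \sum_(p <- e) d p.1 * (p.2 * b) = w * b.
    by rewrite /w mulr_suml; apply: eq_bigr => p _; rewrite mulrA.
  by rewrite -E2 -H2 E1 addrK.
have Hzw : forall z, z \in B -> z * w = w * z - d z.
  by move=> z Hz; rewrite Hderiv // opprB addrCA subrr addr0.
have K0 : forall x, x \in B -> d x * w = 0.
  move=> x Hx; rewrite /w mulr_sumr big_seq big1 // => p Hp.
  have [H1 _] := inB p Hp; rewrite mulrA.
  by have := Hdd x p.1 Hx H1 => /= E; rewrite /d E mul0r.
have K1 : forall x z, x \in B -> z \in B -> d x * z * w = 0.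
  move=> x z Hx Hz; rewrite -mulrA Hzw // mulrBr mulrA K0 // mul0r.
  by have := Hdd x z Hx Hz => /= E; rewrite /d E subrr.
have ww : w * w = 0.
  rewrite {1}/w mulr_suml big_seq big1 // => p Hp.
  by have [H1 H2] := inB p Hp; rewrite K1.
have wbw : forall b, b \in B -> w * b * w = 0.
  move=> b Hb; rewrite {1}/w !mulr_suml big_seq big1 // => p Hp.
  by have [H1 H2] := inB p Hp; rewrite -(mulrA _ p.2 b) K1 // BM.
exists (1 + w), (1 - w); split.
- by rewrite mulrDl mul1r mulrBr mulr1 ww subr0 subrK.
- by rewrite mulrBl mul1r mulrDr mulr1 ww addr0 addrK.
- move=> b Hb.
  have E : (1 + w) * b * (1 - w) = b + d b.
    rewrite mulrDl mul1r mulrDl !mulrBr !mulr1.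
    rewrite wbw // subr0 Hderiv //.
    by rewrite addrAC -addrA.
  by rewrite E /d addrC subrK.
Qed.

Theorem theorem4p6 (F : fieldType) (M : algType F) (B : {pred M}) (phi : M -> M) :
  separable_subalgebra B ->
  first_order_deformation B phi ->
  (exists a a' : M,
      [/\ a * a' = 1, a' * a = 1 &
          forall b, b \in B -> phi b = a * b * a'])
  /\ (exists psi : M -> M,
        is_alg_automorphism psi /\ forall b, b \in B -> psi b = phi b)
  /\ (forall b, b \in B -> (forall m : M, b * m = m * b) -> phi b = b).
Proof.
move=> Hs Hd.
have [a [a' [Haa' Ha'a Hphi]]] := @conj_exists F M B phi Hs Hd.
split; first by exists a, a'.
split.
  exists (fun m => a * m * a'); split; last by move=> b Hb; rewrite Hphi.
  split.
  - by move=> k x y; rewrite mulrDr mulrDl -scalerAr -scalerAl.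
  - by move=> x y /=; rewrite !mulrA -(mulrA _ a' a) Ha'a mulr1.
  - by rewrite mulr1.
  - exists (fun m => a' * m * a) => m /=.
      by rewrite !mulrA Ha'a mul1r -mulrA Ha'a mulr1.
    by rewrite !mulrA Haa' mul1r -mulrA Haa' mulr1.
move=> b Hb Hc; by rewrite Hphi // -mulrA Hc mulrA Haa' mul1r.
Qed.
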